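(* Let $F=(A,R)$ be an abstract argumentation framework and $S,S'$ initial sets of $F$ with $S\neq S'$. (1) If $S'$ is an unattacked initial set of $F$, then $S'$ is an unattacked initial set of $F^S$. (2) If $S'\to S$, then $S'$ is not an initial set of $F^S$. (3) If not $S'\to S$, then $S'\cap\bigcup\mathrm{IS}(F^S)\neq\emptyset$.
   Context: An abstract argumentation framework is a pair $F=(A,R)$ with $A$ finite and $R\subseteq A\times A$ ($a\to b$ means $(a,b)\in R$). $S^+=\{a\mid\exists b\in S:b\to a\}$, $S^-=\{a\mid\exists b\in S: a\to b\}$, and $S\to S'$ means $S^+\cap S'\neq\emptyset$. $S$ is admissible if conflict-free and every attacker of an element of $S$ is attacked by some element of $S$. An initial set is a non-empty admissible set with no non-empty admissible proper subset; $\mathrm{IS}(F)$ denotes the set of initial sets of $F$. An initial set $S$ is unattacked if $S^-=\emptyset$. The reduct is $F^S=(A',R\cap(A'\times A'))$ with $A'=A\setminus(S\cup S^+)$. *)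

(* Defs.v *)
(* An argumentation framework F = (A, R) is represented by a
   finite set of arguments A : {set T} over a finType T and a relation R : rel T;
   the effective attack relation of F is R restricted to A x A. This lets the
   reduct F^S = (A', R ∩ (A' x A')) be represented as (A', R). *)
From mathcomp Require Import all_boot.
Set Implicit Arguments. Unset Strict Implicit. Unset Printing Implicit Defensive.

Section AF.
Variables (T : finType) (A : {set T}) (R : rel T).

Definition att (a b : T) : bool := [&& a \in A, b \in A & R a b].

Definition splus (S : {set T}) : {set T} := [set a | [exists b in S, att b a]].
Definition sminus (S : {set T}) : {set T} := [set a | [exists b in S, att a b]].

Definition set_attacks (S S' : {set T}) : bool := splus S :&: S' != set0.

Definition conflict_free (S : {set T}) : bool :=
  [forall a in S, forall b in S, ~~ att a b].

Definition admissible (S : {set T}) : bool :=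
  [&& S \subset A, conflict_free S &
      [forall a in S, forall b, att b a ==> [exists c in S, att c b]]].

Definition initial (S : {set T}) : bool :=
  [&& S != set0, admissible S &
      [forall S' : {set T}, (S' \proper S) && (S' != set0) ==> ~~ admissible S']].

Definition IS : {set {set T}} := [set S | initial S].

Definition unattacked_initial (S : {set T}) : bool := initial S && (sminus S == set0).

Definition reduct_args (S : {set T}) : {set T} := A :\: (S :|: splus S).

End AF.

(* Main.v *)
Require Import Defs.
From mathcomp Require Import all_boot.
Set Implicit Arguments. Unset Strict Implicit.

Section Aux.
Variables (T : finType) (R : rel T).

Lemma admP (A X : {set T}) :
  reflect [/\ X \subset A, (forall a b, a \in X -> b \in X -> ~~ att A R a b) &
     (forall a b, a \in X -> att A R b a -> exists2 c, c \in X & att A R c b)]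
  (admissible A R X).
Proof.
apply: (iffP and3P) => [[H1 /forallP H2 /forallP H3]|[H1 H2 H3]]; split=> //.
- move=> a b aX bX; move: (H2 a); rewrite aX /= => /forallP/(_ b); by rewrite bX.
- move=> a b aX hba; move: (H3 a); rewrite aX /= => /forallP/(_ b).
  by rewrite hba /= => /existsP[c /andP[cX hc]]; exists c.
- apply/forallP=> a; apply/implyP=> aX; apply/forallP=> b; apply/implyP=> bX.
  exact: H2.
- apply/forallP=> a; apply/implyP=> aX; apply/forallP=> b; apply/implyP=> hba.
  have [c cX hc] := H3 a b aX hba; apply/existsP; exists c; by rewrite cX.
Qed.

Lemma initialP (A S : {set T}) : initial A R S ->
  [/\ S != set0, admissible A R S &
    forall S' : {set T}, S' \subset S -> S' != set0 -> admissible A R S' -> S' = S].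
Proof.
case/and3P=> H1 H2 /forallP H3; split=> // S' sub ne adm.
apply/eqP; apply: contraT => neq.
move: (H3 S'); by rewrite properEneq neq sub ne adm.
Qed.

Lemma initial_intro (A S : {set T}) : S != set0 -> admissible A R S ->
  (forall S' : {set T}, S' \subset S -> S' != set0 -> admissible A R S' -> S' = S) ->
  initial A R S.
Proof.
move=> H1 H2 H3; apply/and3P; split=> //; apply/forallP=> S'; apply/implyP.
case/andP=> /[dup] pr; rewrite properEneq => /andP[neq sub] ne.
apply/negP=> adm; by move/eqP: neq; apply; apply: H3.
Qed.

Lemma att_sub (A1 A2 : {set T}) a b : A1 \subset A2 -> att A1 R a b -> att A2 R a b.
Proof.
move=> sub /and3P[h1 h2 h3]; apply/and3P; split=> //; exact: (subsetP sub).
Qed.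

Lemma exists_initial (A : {set T}) n : forall X : {set T}, #|X| <= n ->
  X != set0 -> admissible A R X -> exists2 Y : {set T}, Y \subset X & initial A R Y.
Proof.
elim: n => [|n IH] X.
  by rewrite leqn0 cards_eq0 => ->.
move=> cX ne adm.
case: (boolP (initial A R X)) => [ini|nini]; first by exists X.
move: nini; rewrite /initial ne adm /= negb_forall => /existsP[Y].
rewrite negb_imply negbK => /andP[/andP[pr ne'] adm'].
have sub : Y \subset X by move: pr; rewrite properEneq => /andP[].
have := proper_card pr => lt.
have cY : #|Y| <= n by rewrite -ltnS; exact: leq_trans lt cX.
have [Z sZ iZ] := IH Y cY ne' adm'.
exists Z => //; exact: subset_trans sZ sub.
Qed.

End Aux.

Theorem proposition4 (T : finType) (A : {set T}) (R : rel T) (S S' : {set T}) :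
  initial A R S -> initial A R S' -> S != S' ->
  (unattacked_initial A R S' -> unattacked_initial (reduct_args A R S) R S') /\
  (set_attacks A R S' S -> ~~ initial (reduct_args A R S) R S') /\
  (~~ set_attacks A R S' S ->
     S' :&: cover (IS (reduct_args A R S) R) != set0).
Proof.
move=> iS iS' neq.
have [neS admS minS] := initialP iS.
have [neS' admS' minS'] := initialP iS'.
have /admP[subS cfS defS] := admS.
have /admP[subS' cfS' defS'] := admS'.
set A' := reduct_args A R S.
have A'A : A' \subset A by rewrite /A' /reduct_args subsetDl.
have inA' x : (x \in A') = [&& x \in A, x \notin S & x \notin splus A R S].
  by rewrite /A' /reduct_args !inE negb_or andbC.
split; [|split].
- case/andP=> _ /eqP noatt.
  have noa a b : a \in S' -> ~~ att A R b a.
    move=> aS'; apply/negP=> hba.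
    have : b \in sminus A R S' by rewrite inE; apply/existsP; exists a; rewrite aS'.
    by rewrite noatt inE.
  have disj : S :&: S' = set0.
    apply/eqP; apply: contraT => ne.
    have adm : admissible A R (S :&: S').
      apply/admP; split.
      + exact: subset_trans (subsetIl _ _) subS.
      + by move=> a b /setIP[aS _] /setIP[bS _]; apply: cfS.
      + by move=> a b /setIP[_ aS'] hba; move: (noa a b aS'); rewrite hba.
    have e1 := minS _ (subsetIl _ _) ne adm.
    have e2 := minS' _ (subsetIr _ _) ne adm.
    by move: neq; rewrite -e1 {1}e2 eqxx.
  have subA' : S' \subset A'.
    apply/subsetP=> x xS'; rewrite inA' (subsetP subS' x xS') /=.
    apply/andP; split.
      apply/negP=> xS; have : x \in S :&: S' by rewrite inE xS.
      by rewrite disj inE.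
    rewrite inE; apply/negP=> /existsP[b /andP[_ hbx]].
    by move: (noa x b xS'); rewrite hbx.
  have noa' a b : a \in S' -> ~~ att A' R b a.
    move=> aS'; apply/negP=> /(att_sub A'A) h; by move: (noa a b aS'); rewrite h.
  apply/andP; split.
    apply: initial_intro => //.
      apply/admP; split=> //.
      + move=> a b aS bS; apply/negP=> /(att_sub A'A) h.
        by move: (cfS' a b aS bS); rewrite h.
      + by move=> a b aS hba; move: (noa' a b aS); rewrite hba.
    move=> Y sY neY /admP[_ cfY _]; apply: minS' => //.
    apply/admP; split.
    + exact: subset_trans sY subS'.
    + by move=> a b aY bY; apply/negP => h; move: (cfS' a b (subsetP sY a aY) (subsetP sY b bY)); rewrite h.
    + by move=> a b aY hba; move: (noa a b (subsetP sY a aY)); rewrite hba.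
  apply/eqP/setP=> x; rewrite !inE; apply/negbTE/negP=> /existsP[b /andP[bS h]].
  by move: (noa' b x bS); rewrite h.
- case/set0Pn=> a /setIP[]; rewrite inE => /existsP[b /andP[bS' hba]] aS.
  have [c cS hcb] := defS a b aS hba.
  apply/negP=> /initialP[_ /admP[sub _ _] _].
  move: (subsetP sub b bS'); rewrite inA' => /and3P[_ _].
  by rewrite inE; case/negP; apply/existsP; exists c; rewrite cS.
- move=> natt.
  have noSplus x : x \in S' -> x \notin splus A R S.
    move=> xS'; rewrite inE; apply/negP=> /existsP[c /andP[cS hcx]].
    have [d dS' hdc] := defS' x c xS' hcx.
    case/negP: natt; apply/set0Pn; exists c; rewrite inE cS andbT inE.
    by apply/existsP; exists d; rewrite dS'.
  set X := S' :\: S.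
  have neX : X != set0.
    apply/negP; rewrite setD_eq0 => sub.
    by move: neq; rewrite (minS S' sub neS' admS') eqxx.
  have XA' : X \subset A'.
    apply/subsetP=> x; rewrite inE => /andP[xS xS'].
    by rewrite inA' (subsetP subS' x xS') xS noSplus.
  have admX : admissible A' R X.
    apply/admP; split=> //.
    + move=> a b; rewrite !inE => /andP[_ aS] /andP[_ bS]; apply/negP => /(att_sub A'A) h.
      by move: (cfS' a b aS bS); rewrite h.
    + move=> a y aX hya.
      have hya' := att_sub A'A hya.
      have aS' : a \in S' by move: aX; rewrite inE => /andP[].
      have [z zS' hzy] := defS' a y aS' hya'.
      have yA' : y \in A' by case/and3P: hya.
      have zX : z \in X.
        rewrite inE zS' andbT; apply/negP=> zS.
        move: yA'; rewrite inA' => /and3P[_ _]; rewrite inE; case/negP.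
        by apply/existsP; exists z; rewrite zS.
      exists z => //; apply/and3P; split=> //; first exact: (subsetP XA').
      by case/and3P: hzy.
  have [Y sY iY] := exists_initial (leqnn #|X|) neX admX.
  have [neY _ _] := initialP iY.
  case/set0Pn: neY => y yY.
  apply/set0Pn; exists y; rewrite inE.
  have : y \in X by exact: (subsetP sY).
  rewrite inE => /andP[_ ->] /=.
  apply/bigcupP; exists Y => //; by rewrite inE.
Qed.
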